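(* If $G$ is a connected finite simple graph with $n\ge 3$ vertices, then $$1 \le \tau(G) \le \binom{n}{\lfloor n/2\rfloor},$$ and both bounds are sharp (each is attained with equality by some such graph).
   Context: A set $D \subseteq V(G)$ is a total dominating set of $G$ if every vertex of $G$ has a neighbor in $D$. $\gamma_t(G)$ is the minimum cardinality of a total dominating set; a total dominating set of that cardinality is a $\gamma_t(G)$-set, and $\tau(G)$ is the number of $\gamma_t(G)$-sets. *)

(* Defs.v *)
(* A finite simple graph is a symmetric irreflexive relation
   adj on a finType T (vertex set = T). *)
From mathcomp Require Import all_boot.
Set Implicit Arguments. Unset Strict Implicit. Unset Printing Implicit Defensive.

Section TotalDomination.
Variables (T : finType) (adj : rel T).

Definition simple_graph : Prop := symmetric adj /\ irreflexive adj.

Definition connected_graph : Prop := forall x y : T, connect adj x y.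

Definition total_dominating (D : {set T}) : bool :=
  [forall v, [exists u in D, adj v u]].

(* gamma_t(G): minimum cardinality of a total dominating set
   (defaults to #|T| if none exists, which never happens for the graphs
   considered: connected with at least 2 vertices). *)
Definition gamma_t : nat :=
  \big[minn/#|T|]_(D : {set T} | total_dominating D) #|D|.

Definition gamma_t_set (D : {set T}) : bool :=
  total_dominating D && (#|D| == gamma_t).

Definition tau : nat := #|[set D : {set T} | gamma_t_set D]|.

End TotalDomination.

(* Main.v *)
Require Import Defs.
From mathcomp Require Import all_boot zify.
Set Implicit Arguments. Unset Strict Implicit.

Lemma bin_up n m : m < n./2 -> 'C(n, m) <= 'C(n, m.+1).
Proof.
move=> hm; rewrite -(@leq_pmul2l m.+1) // mul_bin_left.
apply: leq_mul => //.
have : n./2.*2 <= n by rewrite -[X in _ <= X]odd_double_half leq_addl.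
move: hm; move: (n./2) => h; rewrite -addnn; lia.
Qed.

Lemma bin_mid_aux n d k : k + d = n./2 -> 'C(n, k) <= 'C(n, n./2).
Proof.
elim: d k => [|d IH] k; first by rewrite addn0 => ->.
move=> hk; apply: leq_trans (IH k.+1 _); last by rewrite addSnnS.
by apply: bin_up; rewrite -hk; lia.
Qed.

Lemma bin_mid n k : 'C(n, k) <= 'C(n, n./2).
Proof.
have hh : n./2.*2 <= n by rewrite -[X in _ <= X]odd_double_half leq_addl.
case: (leqP k n./2) => hk.
  by apply: (@bin_mid_aux n (n./2 - k)); lia.
case: (leqP k n) => hkn; last by rewrite bin_small.
rewrite -bin_sub //; apply: (@bin_mid_aux n (n./2 - (n - k))).
have : n <= n./2.*2.+1 by rewrite -[n in n <= _]odd_double_half; case: (odd n); rewrite ?add1n ?add0n.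
move: hk hh; move: (n./2) => h; rewrite -!addnn; lia.
Qed.

Section G.
Variables (T : finType) (adj : rel T).

Lemma bigmin_le (I : eqType) (s : seq I) (P : pred I) (F : I -> nat) a x :
  x \in s -> P x -> \big[minn/a]_(i <- s | P i) F i <= F x.
Proof.
elim: s => [//|y s IH]; rewrite inE big_cons => /orP [/eqP <- -> | xs Px].
  by rewrite geq_minl.
case: (P y); last exact: IH.
by apply: leq_trans (geq_minr _ _) (IH xs Px).
Qed.

Lemma gamma_le D : total_dominating adj D -> gamma_t adj <= #|D|.
Proof. by move=> H; apply: bigmin_le => //; rewrite mem_index_enum. Qed.

Lemma gamma_att D0 : total_dominating adj D0 -> exists D, gamma_t_set adj D.
Proof.
move=> H0.
have : (exists D, total_dominating adj D && (#|D| == gamma_t adj)) \/ gamma_t adj = #|T|.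
  rewrite /gamma_t; apply: (big_ind (fun x => (exists D, total_dominating adj D && (#|D| == x)) \/ x = #|T|)).
  - by right.
  - by move=> x y hx hy; rewrite /minn; case: ifP.
  - by move=> D HD; left; exists D; rewrite HD eqxx.
case=> [[D HD]|Hg]; first by exists D.
exists D0; rewrite /gamma_t_set H0 /=; apply/eqP/anti_leq.
by rewrite gamma_le // Hg max_card.
Qed.

Lemma td_card2 D (x : T) : irreflexive adj -> total_dominating adj D -> 2 <= #|D|.
Proof.
move=> irr /forallP H.
have /existsP [u /andP [Du _]] := H x.
have /existsP [v /andP [Dv uv]] := H u.
have nuv : u != v by apply: contraTneq uv => ->; rewrite irr.
apply: leq_trans (subset_leq_card (_ : [set u; v] \subset D)).
  by rewrite cards2 nuv.
by apply/subsetP => w; rewrite !inE => /orP [] /eqP ->.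
Qed.
End G.

Lemma part1 (T : finType) (adj : rel T) :
      simple_graph adj -> connected_graph adj -> 3 <= #|T| ->
      1 <= tau adj <= 'C(#|T|, #|T|./2).
Proof.
move=> [sym irr] conn n3.
have [x _] : exists x : T, x \in T by apply/card_gt0P; exact: leq_trans n3.
have tdT : total_dominating adj setT.
  apply/forallP => v; apply/existsP.
  have [w] : exists w, w \in [set~ v] by apply/card_gt0P; rewrite cardsC1; lia.
  rewrite !inE => wv.
  case/connectP: (conn v w) => [[|u p]] /=; first by move=> _ E; rewrite E eqxx in wv.
  by case/andP => vu _ _; exists u; rewrite inE vu.
have [D HD] := gamma_att tdT.
apply/andP; split.
  by apply/card_gt0P; exists D; rewrite inE.
apply: leq_trans (bin_mid _ (gamma_t adj)).
rewrite -card_draws; apply: subset_leq_card; apply/subsetP => A.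
by rewrite !inE => /andP [].
Qed.

Definition p4 : rel 'I_4 := fun x y => (x.+1 == y :> nat) || (y.+1 == x :> nat).
Definition o1 : 'I_4 := @Ordinal 4 1 isT.
Definition o2 : 'I_4 := @Ordinal 4 2 isT.

Lemma p4_simple : simple_graph p4.
Proof.
split; first by move=> x y; rewrite /p4 orbC.
by move=> x; rewrite /p4 !eqn_leq ltnn.
Qed.

Lemma p4_conn : connected_graph p4.
Proof.
have H0 : forall k (h : k < 4), connect p4 ord0 (Ordinal h).
  elim=> [|k IH] h; first by rewrite (_ : Ordinal h = ord0) //; apply: val_inj.
  have hk : k < 4 by apply: ltnW.
  apply: connect_trans (IH hk) (connect1 _).
  by rewrite /p4 /= eqxx.
have cs := sym_connect_sym (proj1 p4_simple).
move=> x y; apply: (@connect_trans _ p4 ord0).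
  by rewrite cs; case: x => k h; apply: H0.
by case: y => k h; apply: H0.
Qed.

Lemma p4_td_sub D : total_dominating p4 D -> [set o1; o2] \subset D.
Proof.
move/forallP => H; apply/subsetP => w; rewrite !inE => /orP [] /eqP ->.
  have /existsP [u /andP [Du]] := H ord0.
  case: u Du => [[|[|[|[|k]]]] hu] Du //= _.
  by rewrite (_ : o1 = Ordinal hu) //; apply: val_inj.
have /existsP [u /andP [Du]] := H (@Ordinal 4 3 isT).
case: u Du => [[|[|[|[|k]]]] hu] Du //= _.
by rewrite (_ : o2 = Ordinal hu) //; apply: val_inj.
Qed.

Lemma p4_td : total_dominating p4 [set o1; o2].
Proof.
apply/forallP => v; apply/existsP.
case: v => [[|[|[|[|k]]]] hv] //.
- by exists o1; rewrite !inE eqxx.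
- by exists o2; rewrite !inE eqxx orbT.
- by exists o1; rewrite !inE eqxx.
- by exists o2; rewrite !inE eqxx orbT.
Qed.

Lemma p4_tau : tau p4 = 1.
Proof.
have [D HD] := gamma_att p4_td.
move: (HD) => /andP [tdD /eqP cD].
have sD := p4_td_sub tdD.
have g2 : gamma_t p4 <= 2 by apply: leq_trans (gamma_le p4_td) _; rewrite cards2.
have key : forall E, gamma_t_set p4 E -> E = [set o1; o2].
  move=> E /andP [tdE /eqP cE]; apply/esym/eqP; rewrite eqEcard p4_td_sub //=.
  by rewrite cE cards2.
rewrite /tau (_ : [set E | gamma_t_set p4 E] = [set [set o1; o2]]) ?cards1 //.
apply/setP => E; rewrite !inE; apply/idP/eqP; first exact: key.
by move=> ->; rewrite -(key D HD).
Qed.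

Definition k3 : rel 'I_3 := fun x y => x != y.

Lemma k3_simple : simple_graph k3.
Proof. by split; [move=> x y; rewrite /k3 eq_sym | move=> x; rewrite /k3 eqxx]. Qed.

Lemma k3_conn : connected_graph k3.
Proof.
move=> x y; case: (eqVneq x y) => [->|xy]; first exact: connect0.
by apply: connect1.
Qed.

Lemma k3_td2 (D : {set 'I_3}) : #|D| == 2 -> total_dominating k3 D.
Proof.
move=> /eqP cD; apply/forallP => v; apply/existsP.
have [u] : exists u, u \in D :\ v.
  apply/card_gt0P; have := cardsD1 v D; have := leq_b1 (v \in D); rewrite cD; move=> h1 h2; rewrite -ltnS in h1. rewrite lt0n; apply/negP => /eqP E; move: h2 h1; rewrite E addn0; by case: (v \in D).
by rewrite !inE => /andP [uv Du]; exists u; rewrite Du /k3 eq_sym uv.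
Qed.

Lemma k3_tau : tau k3 = 'C(#|'I_3|, #|'I_3|./2).
Proof.
set S : {set 'I_3} := [set ord0; ord_max].
have cS : #|S| == 2 by rewrite cards2.
have [D HD] := gamma_att (k3_td2 cS).
move: (HD) => /andP [tdD /eqP cD].
have g2 : gamma_t k3 = 2.
  apply/anti_leq; rewrite (leq_trans (gamma_le (k3_td2 cS))) ?(eqP cS) //=.
  by rewrite -cD (td_card2 ord0 (proj2 k3_simple) tdD).
rewrite card_ord /tau (_ : [set E | gamma_t_set k3 E] = [set A : {set 'I_3} | #|A| == 2]).
  by rewrite card_draws card_ord.
apply/setP => E; rewrite !inE /gamma_t_set g2; apply/andP/idP => [[]//|h].
by split => //; apply: k3_td2.
Qed.

Theorem corollary2p9 :
  (forall (T : finType) (adj : rel T),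
      simple_graph adj -> connected_graph adj -> 3 <= #|T| ->
      1 <= tau adj <= 'C(#|T|, #|T|./2))
  /\ (exists (T : finType) (adj : rel T),
      [/\ simple_graph adj, connected_graph adj, 3 <= #|T| & tau adj = 1])
  /\ (exists (T : finType) (adj : rel T),
      [/\ simple_graph adj, connected_graph adj, 3 <= #|T|
        & tau adj = 'C(#|T|, #|T|./2)]).
Proof.
split; first exact: part1.
split.
  exists 'I_4, p4; split.
  - exact: p4_simple.
  - exact: p4_conn.
  - by rewrite card_ord.
  - exact: p4_tau.
exists 'I_3, k3; split.
- exact: k3_simple.
- exact: k3_conn.
- by rewrite card_ord.
- exact: k3_tau.
Qed.
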